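(* Let $\mathbf{A}=(a_{ij})$ be an $m\times n$ binary array (each entry is $0$ or $1$) with row set $R$ and column set $C$, and assume no row and no column of $\mathbf{A}$ consists only of zeros. For $X\subset R$ and $Y\subset C$ define \[ V(X)=\sum_{i\in X}\sum_{j\in C}a_{ij},\qquad V(Y)=\sum_{i\in R}\sum_{j\in Y}a_{ij},\qquad a(X,Y)=\sum_{i\in X}\sum_{j\in Y}a_{ij}, \] and for nonempty $X\subset R$, $Y\subset C$ define $d(X,Y)=\dfrac{a(X,Y)}{V(X)\,V(Y)}$. Let $0<\delta<\frac14$, let $X\subset R$ and $Y\subset C$ be nonempty, and let $X^*\subset X$ and $Y^*\subset Y$ satisfy $\frac{V(X^* )}{V(X)}\ge 1-\delta$ and $\frac{V(Y^* )}{V(Y)}\ge 1-\delta$. Then \[ |d(X,Y)-d(X^*,Y^* )|\le 4\delta . \] *)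

(* Defs.v *)
(* Binary m x n array as a boolean matrix; a_ij = nat_of_bool (A i j). *)
From HB Require Import structures.
From mathcomp Require Import all_boot all_order all_algebra.
Set Implicit Arguments. Unset Strict Implicit. Unset Printing Implicit Defensive.
Import Order.TTheory GRing.Theory Num.Theory.

Definition aent (m n : nat) (A : 'M[bool]_(m, n)) (i : 'I_m) (j : 'I_n) : nat :=
  nat_of_bool (A i j).

Definition Vrow (m n : nat) (A : 'M[bool]_(m, n)) (X : {set 'I_m}) : nat :=
  \sum_(i in X) \sum_(j < n) aent A i j.

Definition Vcol (m n : nat) (A : 'M[bool]_(m, n)) (Y : {set 'I_n}) : nat :=
  \sum_(i < m) \sum_(j in Y) aent A i j.

Definition aXY (m n : nat) (A : 'M[bool]_(m, n)) (X : {set 'I_m}) (Y : {set 'I_n}) : nat :=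
  \sum_(i in X) \sum_(j in Y) aent A i j.

Definition dens (R : realFieldType) (m n : nat) (A : 'M[bool]_(m, n))
    (X : {set 'I_m}) (Y : {set 'I_n}) : R :=
  ((aXY A X Y)%:R / ((Vrow A X)%:R * (Vcol A Y)%:R))%R.

(* Main.v *)
Require Import Defs.
From HB Require Import structures.
From mathcomp Require Import all_boot all_order all_algebra.
From mathcomp Require Import ring lra.
From mathcomp Require Import zify.
Import Order.TTheory GRing.Theory Num.Theory.

Lemma sum_sub (I : finType) (P : {set I}) (F : I -> nat) :
  (\sum_(i in P) F i <= \sum_i F i)%N.
Proof. rewrite big_mkcond /=; apply: leq_sum => i _; case: (i \in P) => //. Qed.

Lemma sum_split (I : finType) (P Q : {set I}) (F : I -> nat) : Q \subset P ->
  (\sum_(i in P) F i = \sum_(i in Q) F i + \sum_(i in P :\: Q) F i)%N.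
Proof. move=> h; rewrite (big_setID Q) /=; by rewrite (setIidPr h). Qed.

Section S.
Variables (m n : nat) (A : 'M[bool]_(m, n)).

Lemma aXY_row (X : {set 'I_m}) (Y : {set 'I_n}) : (aXY A X Y <= Vrow A X)%N.
Proof. apply: leq_sum => i _; exact: sum_sub. Qed.

Lemma aXY_col (X : {set 'I_m}) (Y : {set 'I_n}) : (aXY A X Y <= Vcol A Y)%N.
Proof. exact: sum_sub. Qed.

Lemma Vrow_split (X Xs : {set 'I_m}) : Xs \subset X -> Vrow A X = (Vrow A Xs + Vrow A (X :\: Xs))%N.
Proof. by move=> h; rewrite /Vrow (@sum_split _ _ _ _ h). Qed.

Lemma Vcol_split (Y Ys : {set 'I_n}) : Ys \subset Y -> Vcol A Y = (Vcol A Ys + Vcol A (Y :\: Ys))%N.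
Proof. by move=> h; rewrite /Vcol -big_split /=; apply: eq_bigr => i _; rewrite (@sum_split _ _ _ _ h). Qed.

Lemma aXY_splitX (X Xs : {set 'I_m}) (Y : {set 'I_n}) : Xs \subset X -> aXY A X Y = (aXY A Xs Y + aXY A (X :\: Xs) Y)%N.
Proof. by move=> h; rewrite /aXY (@sum_split _ _ _ _ h). Qed.

Lemma aXY_splitY (X : {set 'I_m}) (Y Ys : {set 'I_n}) : Ys \subset Y -> aXY A X Y = (aXY A X Ys + aXY A X (Y :\: Ys))%N.
Proof. by move=> h; rewrite /aXY -big_split /=; apply: eq_bigr => i _; rewrite (@sum_split _ _ _ _ h). Qed.

Lemma key_nat (X Xs : {set 'I_m}) (Y Ys : {set 'I_n}) : Xs \subset X -> Ys \subset Y ->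
  (aXY A X Y + Vrow A Xs + Vcol A Ys <= aXY A Xs Ys + Vrow A X + Vcol A Y)%N.
Proof.
move=> hx hy.
rewrite (aXY_splitX _ _ Y hx) (aXY_splitY Xs _ _ hy) (@Vrow_split _ _ hx) (@Vcol_split _ _ hy).
have := aXY_row (X :\: Xs) Y; have := aXY_col Xs (Y :\: Ys). lia.
Qed.

Lemma aXY_mono (X Xs : {set 'I_m}) (Y Ys : {set 'I_n}) : Xs \subset X -> Ys \subset Y -> (aXY A Xs Ys <= aXY A X Y)%N.
Proof. move=> hx hy; rewrite (aXY_splitX _ _ Y hx) (aXY_splitY Xs _ _ hy); lia. Qed.

Lemma Vrow_pos (X : {set 'I_m}) : (forall i : 'I_m, exists j : 'I_n, A i j) -> X != set0 -> (0 < Vrow A X)%N.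
Proof.
move=> h /set0Pn [i iX]; have [j Aij] := h i.
rewrite /Vrow (bigD1 i) //= (bigD1 j) //= /aent Aij; lia.
Qed.

Lemma Vcol_pos (Y : {set 'I_n}) : (forall j : 'I_n, exists i : 'I_m, A i j) -> Y != set0 -> (0 < Vcol A Y)%N.
Proof.
move=> h /set0Pn [j jY]; have [i Aij] := h j.
rewrite /Vcol (bigD1 i) //= (bigD1 j) //= /aent Aij; lia.
Qed.
End S.
Local Open Scope ring_scope.
Lemma key (R : realFieldType) (d x y xs ys a as_ : R) :
  0 < d -> d < 1/4 -> 1 <= x -> 1 <= y -> (1-d)*x <= xs -> (1-d)*y <= ys ->
  xs <= x -> ys <= y -> as_ <= a -> 0 <= as_ -> a + xs + ys <= as_ + x + y ->
  as_ <= xs * ys ->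
  `| a / (x * y) - as_ / (xs * ys) | <= 4 * d.
Proof.
move=> d0 d1 x1 y1 hx hy xsx ysy aa as0 hs hxy.
have xs0 : 0 < xs by nra.
have ys0 : 0 < ys by nra.
have P1 : 0 < x * y by nra.
have P2 : 0 < xs * ys by nra.
have -> : a / (x * y) - as_ / (xs * ys) = (a * (xs * ys) - as_ * (x * y)) / ((x*y)*(xs*ys)).
  have x0 : 0 < x by lra.
  have y0 : 0 < y by lra.
  by field; rewrite (gt_eqF x0) (gt_eqF y0) (gt_eqF xs0) (gt_eqF ys0).
have P3 : 0 < (x*y)*(xs*ys) by apply: mulr_gt0.
rewrite ler_norml !ler_pdivrMr // ler_pdivlMr //; apply/andP; split.
-
  have h1 : as_ * (x*y) - a*(xs*ys) <= as_ * (x*y - xs*ys) by nra.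
  have h2 : x*y - xs*ys <= 2*d*(x*y) by nra.
  have h3 : as_ * (x*y - xs*ys) <= (xs*ys) * (2*d*(x*y)).
    have : 0 <= x*y - xs*ys by nra.
    nra.
  nra.
- have xy : xs*ys <= x*y by nra.
  have h0 : as_*(xs*ys) <= as_*(x*y) by apply: ler_wpM2l.
  have h1 : a*(xs*ys) - as_*(x*y) <= (a - as_)*(xs*ys) by lra.
  have h2 : a - as_ <= d*x + d*y by nra.
  have h3 : d*x + d*y <= 2*d*(x*y) by nra.
  have h4 : (a - as_)*(xs*ys) <= (2*d*(x*y))*(xs*ys) by nra.
  nra.
Qed.

Theorem mainTheorem1 (R : realFieldType) (m n : nat) (A : 'M[bool]_(m, n))
    (no_zero_row : forall i : 'I_m, exists j : 'I_n, A i j)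
    (no_zero_col : forall j : 'I_n, exists i : 'I_m, A i j)
    (delta : R) (hd0 : 0 < delta) (hd1 : delta < 1 / 4)
    (X Xs : {set 'I_m}) (Y Ys : {set 'I_n})
    (hX : X != set0) (hY : Y != set0)
    (hXs : Xs \subset X) (hYs : Ys \subset Y)
    (hVX : (Vrow A Xs)%:R / (Vrow A X)%:R >= 1 - delta)
    (hVY : (Vcol A Ys)%:R / (Vcol A Y)%:R >= 1 - delta) :
  `| dens R A X Y - dens R A Xs Ys | <= 4 * delta.
Proof.
have px := Vrow_pos _ _ A X no_zero_row hX.
have py := Vcol_pos _ _ A Y no_zero_col hY.
have kn := key_nat _ _ A _ _ _ _ hXs hYs.
have mo := aXY_mono _ _ A _ _ _ _ hXs hYs.
have r1 := aXY_row _ _ A Xs Ys.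
have hrx := Vrow_split _ _ A _ _ hXs.
have hcy := Vcol_split _ _ A _ _ hYs.
rewrite /dens; apply: key => //.
- by rewrite ler1n.
- by rewrite ler1n.
- by rewrite -ler_pdivlMr // ltr0n.
- by rewrite -ler_pdivlMr // ltr0n.
- by rewrite ler_nat hrx leq_addr.
- by rewrite ler_nat hcy leq_addr.
- by rewrite ler_nat.
- by rewrite -!natrD ler_nat.
- rewrite -natrM ler_nat.
  case E: (Vcol A Ys) hVY => [|k] hV.
    by move: hV; rewrite mul0r; lra.
  by apply: leq_trans r1 (leq_pmulr _ _).
Qed.
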